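(* Under i.i.d. Rayleigh fading on all $2M$ links with average SNR $\bar\gamma$, as $\bar\gamma\to0$, $$\bar R_{SD}\sim\frac{\bar\gamma}{2\ln2}\sum_{k=1}^{2M}\frac1k,\qquad \bar R_{\rm conv}\sim\frac{\bar\gamma}{4\ln2}\sum_{k=1}^{M}\frac1k,$$ so that $\lim_{\bar\gamma\to0}\bar R_{SD}/\bar R_{\rm conv}=2\sum_{k=1}^{2M}\frac1k\big/\sum_{k=1}^M\frac1k$, which equals $3$ for $M=1$, tends to $2$ as $M\to\infty$, and lies in $[2,3]$ for all $M\ge1$.
   Context: Network of a source, $M$ relays, and a destination; SNRs $\gamma_{Sk},\gamma_{kD}$ of the $2M$ links are i.i.d. exponential with mean $\bar\gamma$ (Rayleigh fading). $\bar R_{SD}=M\int_0^\infty\log_2(1+x)f_\gamma(x)(F_\gamma(x))^{2M-1}dx$ with $f_\gamma(x)=e^{-x/\bar\gamma}/\bar\gamma$, $F_\gamma(x)=1-e^{-x/\bar\gamma}$ (the maximum average rate of the buffer-aided protocol). $\bar R_{\rm conv}=\frac12E\{\max_k\min\{\log_2(1+\gamma_{Sk}),\log_2(1+\gamma_{kD})\}\}$ is the average rate of conventional (non-buffer-aided) relay selection; in this i.i.d. Rayleigh case $\bar R_{\rm conv}=\frac M2\sum_{k=0}^{M-1}\binom{M-1}{k}\frac{(-1)^k}{(1+k)\ln2}e^{2(1+k)/\bar\gamma}E_1(2(1+k)/\bar\gamma)$, where $E_1(x)=\int_1^\infty e^{-xt}/t\,dt$. $f\sim g$ means $f/g\to1$.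 *)

(* Defs.v *)
From Stdlib Require Import Reals Lra Lia ClassicalEpsilon.
Open Scope R_scope.

Definition log2 (x : R) : R := ln x / ln 2.

Fixpoint harm (n : nat) : R :=
  match n with
  | O => 0
  | S m => harm m + / INR (S m)
  end.

Definition improper_integral (f : R -> R) (a l : R) : Prop :=
  forall eps, 0 < eps -> exists B, forall b, B <= b ->
    exists pr : Riemann_integrable f a b, Rabs (RiemannInt pr - l) < eps.

(* the value of the improper integral (chosen by epsilon; meaningful when it converges) *)
Definition improper_int (f : R -> R) (a : R) : R :=
  epsilon (inhabits 0) (fun l => improper_integral f a l).

(* Rayleigh-fading SNR pdf and cdf with mean gbar *)
Definition f_gamma (gbar x : R) : R := exp (- x / gbar) / gbar.
Definition F_gamma (gbar x : R) : R := 1 - exp (- x / gbar).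

Definition R_SD (M : nat) (gbar : R) : R :=
  INR M * improper_int
    (fun x => log2 (1 + x) * f_gamma gbar x * F_gamma gbar x ^ (2 * M - 1)) 0.

Definition E1 (x : R) : R := improper_int (fun t => exp (- x * t) / t) 1.

(* closed form of the conventional relay-selection rate (i.i.d. Rayleigh) *)
Definition R_conv (M : nat) (gbar : R) : R :=
  INR M / 2 * sum_f_R0 (fun k =>
     C (M - 1) k * (-1) ^ k / ((1 + INR k) * ln 2)
     * exp (2 * (1 + INR k) / gbar) * E1 (2 * (1 + INR k) / gbar)) (M - 1).

(* Main.v *)
From Coquelicot Require Import Coquelicot.
From Stdlib Require Import Reals Lra Lia ClassicalEpsilon ZArith.
Require Import Defs.
Open Scope R_scope.

Definition conv (f : R -> R) (a l : R) : Prop :=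
  (forall b, a <= b -> ex_RInt f a b) /\
  (forall eps, 0 < eps -> exists B, forall b, B <= b -> Rabs (RInt f a b - l) < eps).

Lemma conv_improper f a l : conv f a l -> improper_integral f a l.
Proof.
  intros [H1 H2] eps Heps. destruct (H2 eps Heps) as [B HB].
  exists (Rmax a B). intros b Hb.
  assert (Hab: a <= b) by (eapply Rle_trans; [apply Rmax_l|exact Hb]).
  exists (ex_RInt_Reals_0 _ _ _ (H1 b Hab)).
  rewrite <- RInt_Reals. apply HB. eapply Rle_trans; [apply Rmax_r|exact Hb].
Qed.

Lemma improper_unique f a l1 l2 :
  improper_integral f a l1 -> improper_integral f a l2 -> l1 = l2.
Proof.
  intros H1 H2. destruct (Req_dec l1 l2) as [E|E]; [exact E|exfalso].
  assert (Hd : 0 < Rabs (l1 - l2) / 2).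
  { assert (0 < Rabs (l1 - l2)) by (apply Rabs_pos_lt; lra). lra. }
  destruct (H1 _ Hd) as [B1 HB1]. destruct (H2 _ Hd) as [B2 HB2].
  destruct (HB1 (Rmax B1 B2) (Rmax_l _ _)) as [p1 Hp1].
  destruct (HB2 (Rmax B1 B2) (Rmax_r _ _)) as [p2 Hp2].
  rewrite (RiemannInt_P5 p2 p1) in Hp2.
  revert Hp1 Hp2. set (I := RiemannInt p1). intros Hp1 Hp2.
  assert (Rabs (l1 - l2) <= Rabs (I - l1) + Rabs (I - l2)).
  { replace (l1 - l2) with (-(I - l1) + (I - l2)) by ring.
    eapply Rle_trans; [apply Rabs_triang|]. rewrite Rabs_Ropp. lra. }
  lra.
Qed.

Lemma conv_int f a l : conv f a l -> improper_int f a = l.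
Proof.
  intros H. unfold improper_int.
  apply improper_unique with f a; [|apply conv_improper; exact H].
  apply epsilon_spec. exists l. apply conv_improper; exact H.
Qed.

Lemma conv_ext f g a l : (forall x, a <= x -> f x = g x) -> conv f a l -> conv g a l.
Proof.
  intros Hfg [H1 H2]. split.
  - intros b Hb. apply ex_RInt_ext with f; [|auto].
    intros x Hx. rewrite Rmin_left in Hx by lra. apply Hfg; lra.
  - intros eps Heps. destruct (H2 eps Heps) as [B HB]. exists (Rmax a B).
    intros b Hb. assert (a <= b) by (eapply Rle_trans; [apply Rmax_l|exact Hb]).
    rewrite <- (RInt_ext f). apply HB. eapply Rle_trans; [apply Rmax_r|exact Hb].
    intros x Hx. rewrite Rmin_left in Hx by lra. apply Hfg; lra.
Qed.

Lemma conv_plus f g a l1 l2 : conv f a l1 -> conv g a l2 ->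
  conv (fun x => f x + g x) a (l1 + l2).
Proof.
  intros [F1 F2] [G1 G2]. split.
  - intros b Hb. apply (ex_RInt_plus f g); auto.
  - intros eps Heps. destruct (F2 (eps/2)) as [B1 HB1]; [lra|].
    destruct (G2 (eps/2)) as [B2 HB2]; [lra|].
    exists (Rmax a (Rmax B1 B2)). intros b Hb.
    assert (a <= b /\ B1 <= b /\ B2 <= b) as [? [? ?]].
    { repeat split; eapply Rle_trans; try exact Hb;
      eauto using Rmax_l, Rmax_r, Rle_trans. }
    rewrite (RInt_plus f g) by auto.
    specialize (HB1 b H0). specialize (HB2 b H1).
    change (plus (RInt f a b) (RInt g a b)) with (RInt f a b + RInt g a b).
    replace (RInt f a b + RInt g a b - (l1 + l2)) with
      ((RInt f a b - l1) + (RInt g a b - l2)) by ring.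
    eapply Rle_lt_trans; [apply Rabs_triang|]. lra.
Qed.

Lemma conv_scal f a l c : conv f a l -> conv (fun x => c * f x) a (c * l).
Proof.
  intros [F1 F2]. split.
  - intros b Hb. apply (ex_RInt_scal f); auto.
  - intros eps Heps. destruct (F2 (eps / (Rabs c + 1))) as [B HB].
    { apply Rdiv_lt_0_compat; [lra|]. pose proof (Rabs_pos c); lra. }
    exists (Rmax a B). intros b Hb.
    assert (a <= b) by (eapply Rle_trans; [apply Rmax_l|exact Hb]).
    assert (B <= b) by (eapply Rle_trans; [apply Rmax_r|exact Hb]).
    rewrite (RInt_scal f) by auto.
    change (scal c (RInt f a b)) with (c * RInt f a b).
    replace (c * RInt f a b - c * l) with (c * (RInt f a b - l)) by ring.
    rewrite Rabs_mult. specialize (HB b H0).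
    pose proof (Rabs_pos c). pose proof (Rabs_pos (RInt f a b - l)).
    apply Rle_lt_trans with ((Rabs c + 1) * Rabs (RInt f a b - l)); [nra|].
    apply Rmult_lt_reg_l with (/ (Rabs c + 1)).
    { apply Rinv_0_lt_compat; lra. }
    rewrite <- Rmult_assoc, Rinv_l by lra. 
    replace (/ (Rabs c + 1) * eps) with (eps / (Rabs c + 1)) by (unfold Rdiv; ring). lra.
Qed.

Lemma conv_sum (F : nat -> R -> R) (L : nat -> R) a n :
  (forall j, (j <= n)%nat -> conv (F j) a (L j)) ->
  conv (fun x => sum_f_R0 (fun j => F j x) n) a (sum_f_R0 L n).
Proof.
  induction n as [|n IH]; intros H.
  - simpl. apply H; lia.
  - simpl. apply conv_plus; [apply IH; intros; apply H; lia | apply H; lia].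
Qed.

Lemma conv_le f g a l1 l2 : (forall x, a <= x -> f x <= g x) ->
  conv f a l1 -> conv g a l2 -> l1 <= l2.
Proof.
  intros Hfg [F1 F2] [G1 G2].
  destruct (Rle_dec l1 l2) as [E|E]; [exact E|exfalso].
  assert (Hd : 0 < (l1 - l2) / 2) by lra.
  destruct (F2 _ Hd) as [B1 HB1]. destruct (G2 _ Hd) as [B2 HB2].
  set (b := Rmax a (Rmax B1 B2)).
  assert (a <= b /\ B1 <= b /\ B2 <= b) as [? [? ?]].
  { unfold b; repeat split; eapply Rle_trans; try apply Rle_refl;
    eauto using Rmax_l, Rmax_r, Rle_trans. }
  specialize (HB1 b H0). specialize (HB2 b H1).
  assert (RInt f a b <= RInt g a b).
  { apply RInt_le; auto. intros; apply Hfg; lra. }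
  apply Rabs_def2 in HB1. apply Rabs_def2 in HB2. lra.
Qed.

Lemma RInt_mono_b (h : R -> R) a b b' : a <= b <= b' -> ex_RInt h a b' ->
  (forall x, a <= x -> 0 <= h x) -> RInt h a b <= RInt h a b'.
Proof.
  intros Hb He Hp.
  assert (E1 : ex_RInt h a b) by (apply (ex_RInt_Chasles_1 h a b b'); auto).
  assert (E2 : ex_RInt h b b') by (apply (ex_RInt_Chasles_2 h a b b'); auto).
  rewrite <- (RInt_Chasles h a b b' E1 E2).
  change (plus (RInt h a b) (RInt h b b')) with (RInt h a b + RInt h b b').
  assert (0 <= RInt h b b'); [|lra].
  apply RInt_ge_0; [lra|auto|]. intros; apply Hp; lra.
Qed.

Lemma conv_mono (h k : R -> R) a L : (forall x, a <= x -> continuous h x) ->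
  (forall x, a <= x -> 0 <= h x <= k x) -> conv k a L -> exists l, conv h a l.
Proof.
  intros Hc Hhk [K1 K2].
  assert (Hex : forall b, a <= b -> ex_RInt h a b).
  { intros b Hb. apply (@ex_RInt_continuous R_CompleteNormedModule). intros z Hz.
    rewrite Rmin_left in Hz by lra. apply Hc; lra. }
  destruct (K2 1) as [B1 HB1]; [lra|].
  set (E := fun y => exists b, a <= b /\ y = RInt h a b).
  assert (Hbd : bound E).
  { exists (L + 1). intros y [b [Hb ->]].
    set (b' := Rmax b (Rmax a B1)).
    assert (b <= b' /\ a <= b' /\ B1 <= b') as [? [? ?]].
    { unfold b'; repeat split; eauto using Rmax_l, Rmax_r, Rle_trans. }
    apply Rle_trans with (RInt h a b').
    { apply RInt_mono_b; auto. intros; apply Hhk; auto. }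
    apply Rle_trans with (RInt k a b').
    { apply RInt_le; auto. intros; apply Hhk; lra. }
    specialize (HB1 b' H1). apply Rabs_def2 in HB1. lra. }
  destruct (completeness E Hbd) as [m [Hub Hlub]].
  { exists (RInt h a a). exists a. split; [lra|auto]. }
  exists m. split; [exact Hex|].
  intros eps Heps.
  destruct (Classical_Prop.classic (exists b, a <= b /\ m - eps < RInt h a b)) as [[b0 [Hb0 Hlt]]|Hn].
  - exists b0. intros b Hb.
    assert (RInt h a b0 <= RInt h a b).
    { apply RInt_mono_b; [lra| apply Hex; lra|]. intros; apply Hhk; auto. }
    assert (RInt h a b <= m) by (apply Hub; exists b; split; [lra|auto]).
    apply Rabs_def1; lra.
  - exfalso. assert (m <= m - eps); [|lra].
    apply Hlub. intros y [b [Hb ->]].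
    destruct (Rle_dec (RInt h a b) (m - eps)) as [?|Hx]; [auto|].
    exfalso; apply Hn; exists b; split; [auto|lra].
Qed.

Lemma conv_prim (f F : R -> R) a :
  (forall t, a <= t -> is_derive F t (f t)) -> (forall t, a <= t -> continuous f t) ->
  (forall eps, 0 < eps -> exists B, forall b, B <= b -> Rabs (F b) < eps) ->
  conv f a (- F a).
Proof.
  intros Hd Hc Hl.
  assert (HI : forall b, a <= b -> is_RInt f a b (minus (F b) (F a))).
  { intros b Hb. apply (@is_RInt_derive R_CompleteNormedModule); intros x Hx;
    rewrite Rmin_left in Hx by lra; [apply Hd|apply Hc]; lra. }
  split.
  - intros b Hb. eexists; apply HI; auto.
  - intros eps Heps. destruct (Hl eps Heps) as [B HB]. exists (Rmax a B).
    intros b Hb. assert (a <= b) by (eapply Rle_trans; [apply Rmax_l|exact Hb]).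
    rewrite (is_RInt_unique _ _ _ _ (HI b H)).
    change (minus (F b) (F a)) with (F b - F a).
    replace (F b - F a - - F a) with (F b) by ring. apply HB.
    eapply Rle_trans; [apply Rmax_r|exact Hb].
Qed.

Lemma cont_of_ex (f : R -> R) x : ex_derive f x -> continuous f x.
Proof. intros H. apply (@ex_derive_continuous R_AbsRing R_NormedModule). exact H. Qed.

Lemma exp_cube y : 0 <= y -> y * y * y / 27 <= exp y.
Proof.
  intros Hy. replace y with (y/3 + y/3 + y/3) at 4 by field.
  rewrite !exp_plus. pose proof (exp_ineq1_le (y/3)).
  assert (0 <= y/3) by lra.
  replace (y*y*y/27) with ((y/3)*(y/3)*(y/3)) by field.
  apply Rmult_le_compat; try nra; apply Rmult_le_compat; nra.
Qed.

Lemma decay c K : 0 < c -> 0 < K -> forall eps, 0 < eps -> exists B, forall b, B <= b ->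
  K * (b*b+b+1) * exp (- c * b) < eps.
Proof.
  intros Hc HK eps He.
  assert (Hc3 : 0 < c*c*c) by (repeat apply Rmult_lt_0_compat; lra).
  exists (1 + 81*K/(c*c*c*eps)). intros b Hb.
  assert (H0 : 0 <= 81*K/(c*c*c*eps)).
  { apply Rlt_le, Rdiv_lt_0_compat; [lra|]. apply Rmult_lt_0_compat; lra. }
  assert (Hb1 : 1 <= b) by lra.
  assert (HB : 81*K < c*c*c*eps*b).
  { assert (81*K/(c*c*c*eps) < b) by lra.
    apply Rmult_lt_compat_l with (r := c*c*c*eps) in H.
    2: apply Rmult_lt_0_compat; lra.
    replace (c*c*c*eps*(81*K/(c*c*c*eps))) with (81*K) in H by (field; lra). lra. }
  pose proof (exp_cube (c*b)) as HX. assert (0 <= c*b) by nra.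
  specialize (HX H). set (X := exp (c*b)) in *.
  assert (HXp : 0 < X) by apply exp_pos.
  replace (exp (- c * b)) with (/ X) by (unfold X; rewrite <- exp_Ropp; f_equal; ring).
  apply Rmult_lt_reg_r with X; [lra|]. rewrite Rmult_assoc, Rinv_l by lra.
  rewrite Rmult_1_r.
  assert (K*(b*b+b+1) <= 3*K*(b*b)).
  { assert (b*b+b+1 <= 3*(b*b)) by nra.
    replace (3*K*(b*b)) with (K*(3*(b*b))) by ring. apply Rmult_le_compat_l; lra. }
  assert (3*K*(b*b) * 27 < c*c*c*eps*b * (b*b)).
  { assert (0 < b*b) by nra. replace (3*K*(b*b)*27) with (81*K*(b*b)) by ring.
    apply Rmult_lt_compat_r; lra. }
  assert (eps * (c*b*(c*b)*(c*b)/27) <= eps * X) by (apply Rmult_le_compat_l; lra).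
  replace (eps * (c*b*(c*b)*(c*b)/27)) with (c*c*c*eps*b*(b*b)/27) in H3 by field.
  lra.
Qed.

Lemma conv_prim_decay (f F : R -> R) a c K : 0 <= a -> 0 < c -> 0 < K ->
  (forall t, a <= t -> is_derive F t (f t)) -> (forall t, a <= t -> continuous f t) ->
  (forall b, 0 <= b -> Rabs (F b) <= K * (b*b+b+1) * exp (- c * b)) ->
  conv f a (- F a).
Proof.
  intros Ha Hc HK Hd Hcf Hb. apply conv_prim; auto.
  intros eps Heps. destruct (decay c K Hc HK eps Heps) as [B HB].
  exists (Rmax 0 B). intros b Hb'. 
  assert (0 <= b) by (eapply Rle_trans; [apply Rmax_l|exact Hb']).
  assert (B <= b) by (eapply Rle_trans; [apply Rmax_r|exact Hb']).
  eapply Rle_lt_trans; [apply Hb; auto| apply HB; auto].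
Qed.

Lemma conv_e0 c a : 0 <= a -> 0 < c -> conv (fun t => exp (- c * t)) a (exp (- c * a) / c).
Proof.
  intros Ha Hc.
  replace (exp (- c * a) / c) with (- (fun t => - exp (- c * t) / c) a) by (simpl; field; lra).
  apply (conv_prim_decay _ (fun t => - exp (- c * t) / c) a c (/c)); auto.
  - apply Rinv_0_lt_compat; lra.
  - intros t _. auto_derive; auto. field; lra.
  - intros t _. apply cont_of_ex. auto_derive; auto.
  - intros b Hb. rewrite Rabs_left1.
    2: { assert (0 < exp (- c * b) / c) by (apply Rdiv_lt_0_compat; [apply exp_pos|lra]). lra. }
    pose proof (exp_pos (- c * b)).
    assert (0 < /c) by (apply Rinv_0_lt_compat; lra).
    replace (- (- exp (- c * b) / c)) with (/c * 1 * exp (- c * b)) by (field; lra).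
    apply Rmult_le_compat_r; [lra|]. apply Rmult_le_compat_l; nra.
Qed.

Lemma conv_e1 c a : 0 <= a -> 0 < c ->
  conv (fun t => t * exp (- c * t)) a ((a / c + 1 / (c*c)) * exp (- c * a)).
Proof.
  intros Ha Hc.
  replace ((a / c + 1 / (c*c)) * exp (- c * a)) with
    (- (fun t => - ((t / c + 1 / (c*c)) * exp (- c * t))) a) by (simpl; ring).
  assert (0 < /c) by (apply Rinv_0_lt_compat; lra).
  assert (0 < /(c*c)) by (apply Rinv_0_lt_compat; nra).
  apply (conv_prim_decay _ (fun t => - ((t / c + 1 / (c*c)) * exp (- c * t))) a c (/c + /(c*c))); auto.
  - lra.
  - intros t _. auto_derive; auto. field; lra.
  - intros t _. apply cont_of_ex. auto_derive; auto.
  - intros b Hb. pose proof (exp_pos (- c * b)).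
    assert (0 <= b / c) by (apply Rmult_le_pos; lra).
    rewrite Rabs_Ropp, Rabs_pos_eq.
    2: { apply Rmult_le_pos; [|lra]. unfold Rdiv. lra. }
    apply Rmult_le_compat_r; [lra|]. unfold Rdiv. nra.
Qed.

Lemma conv_e2 c a : 0 <= a -> 0 < c ->
  conv (fun t => t * t * exp (- c * t)) a
    ((a * a / c + 2 * a / (c*c) + 2 / (c*c*c)) * exp (- c * a)).
Proof.
  intros Ha Hc.
  replace ((a * a / c + 2 * a / (c*c) + 2 / (c*c*c)) * exp (- c * a)) with
    (- (fun t => - ((t * t / c + 2 * t / (c*c) + 2 / (c*c*c)) * exp (- c * t))) a) by (simpl; ring).
  assert (0 < /c) by (apply Rinv_0_lt_compat; lra).
  assert (0 < /(c*c)) by (apply Rinv_0_lt_compat; nra).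
  assert (0 < /(c*c*c)) by (apply Rinv_0_lt_compat; repeat apply Rmult_lt_0_compat; lra).
  apply (conv_prim_decay _ (fun t => - ((t * t / c + 2 * t / (c*c) + 2 / (c*c*c)) * exp (- c * t))) a c (/c + 2*/(c*c) + 2*/(c*c*c))); auto.
  - lra.
  - intros t _. auto_derive; auto. field; lra.
  - intros t _. apply cont_of_ex. auto_derive; auto.
  - intros b Hb. pose proof (exp_pos (- c * b)).
    assert (0 <= b * b / c) by (unfold Rdiv; apply Rmult_le_pos; nra).
    assert (0 <= 2 * b / (c*c)) by (unfold Rdiv; apply Rmult_le_pos; nra).
    rewrite Rabs_Ropp, Rabs_pos_eq.
    2: { apply Rmult_le_pos; [|lra]. unfold Rdiv in *. nra. }
    apply Rmult_le_compat_r; [lra|]. unfold Rdiv in *. nra.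
Qed.

Lemma pow1R n : 1 ^ n = 1.
Proof. induction n; simpl; [ring|rewrite IHn; ring]. Qed.

Lemma Cn0 n : C n 0 = 1.
Proof. unfold C. rewrite Nat.sub_0_r. simpl. pose proof (INR_fact_neq_0 n). field. lra. Qed.
Lemma Cnn n : C n n = 1.
Proof. unfold C. rewrite Nat.sub_diag. simpl. pose proof (INR_fact_neq_0 n). field. lra. Qed.

Lemma Cshift m j : (j <= m)%nat -> C m j / (INR j + 1) = C (S m) (S j) / (INR m + 1).
Proof.
  intros H. unfold C. replace (S m - S j)%nat with (m - j)%nat by lia.
  change (Factorial.fact (S m)) with (S m * Factorial.fact m)%nat.
  change (Factorial.fact (S j)) with (S j * Factorial.fact j)%nat.
  rewrite !mult_INR, !S_INR.
  pose proof (INR_fact_neq_0 m). pose proof (INR_fact_neq_0 j).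
  pose proof (INR_fact_neq_0 (m - j)). pose proof (pos_INR j). pose proof (pos_INR m).
  field. repeat split; lra.
Qed.

Lemma sum_alt m : sum_f_R0 (fun j => C (S m) (S j) * (-1) ^ j) m = 1.
Proof.
  pose proof (binomial (-1) 1 (S m)) as Hb.
  replace (-1 + 1) with 0 in Hb by ring. rewrite pow_ne_zero in Hb by lia.
  rewrite decomp_sum in Hb by lia. simpl pred in Hb.
  rewrite Cn0 in Hb. rewrite pow1R in Hb. simpl pow at 1 in Hb.
  rewrite (sum_eq _ (fun i => (C (S m) (S i) * (-1) ^ i) * (-1))) in Hb.
  2: { intros i _. rewrite pow1R. simpl. ring. }
  rewrite <- scal_sum in Hb. lra.
Qed.

Lemma sumB m : sum_f_R0 (fun j => C m j * (-1) ^ j / (INR j + 1)) m = 1 / (INR m + 1).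
Proof.
  rewrite (sum_eq _ (fun j => (C (S m) (S j) * (-1) ^ j) * / (INR m + 1))).
  - rewrite <- scal_sum, sum_alt. field. pose proof (pos_INR m); lra.
  - intros i Hi. unfold Rdiv. rewrite Rmult_assoc, (Rmult_comm ((-1)^i)), <- Rmult_assoc.
    fold (Rdiv (C m i) (INR i + 1)). rewrite Cshift by lia. unfold Rdiv; ring.
Qed.

Lemma sumA m : sum_f_R0 (fun j => C (S m) (S j) * (-1) ^ j / (INR j + 1)) m = harm (S m).
Proof.
  induction m as [|m IH].
  - simpl. rewrite Cnn. field.
  - rewrite tech5.
    rewrite (sum_eq _ (fun j => C (S m) j * (-1) ^ j / (INR j + 1) +
                               C (S m) (S j) * (-1) ^ j / (INR j + 1))).
    2: { intros i Hi. rewrite <- pascal by lia. pose proof (pos_INR i). field. lra. }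
    rewrite sum_plus, IH.
    pose proof (sumB (S m)) as HB. rewrite tech5 in HB.
    rewrite !Cnn in *. 
    change (harm (S (S m))) with (harm (S m) + / INR (S (S m))).
    rewrite (S_INR (S m)) in *. pose proof (pos_INR (S m)).
    assert (INR (S m) + 1 <> 0) by lra.
    replace (sum_f_R0 (fun j : nat => C (S m) j * (-1) ^ j / (INR j + 1)) m) with
      (1 / (INR (S m) + 1) - 1 * (-1) ^ S m / (INR (S m) + 1)) by lra.
    field. auto.
Qed.

Lemma sumS m : sum_f_R0 (fun j => C m j * (-1) ^ j / (INR j + 1) ^ 2) m = harm (S m) / (INR m + 1).
Proof.
  rewrite (sum_eq _ (fun j => (C (S m) (S j) * (-1) ^ j / (INR j + 1)) * / (INR m + 1))).
  - rewrite <- scal_sum, sumA. unfold Rdiv. ring.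
  - intros i Hi. pose proof (Cshift m i Hi). pose proof (pos_INR i). pose proof (pos_INR m).
    replace (C m i * (-1) ^ i / (INR i + 1) ^ 2) with (C m i / (INR i + 1) * ((-1)^i / (INR i + 1))) by (field; lra).
    rewrite H. field. lra.
Qed.

Lemma exp_pow y n : exp y ^ n = exp (INR n * y).
Proof.
  induction n as [|n IH].
  - simpl. rewrite Rmult_0_l, exp_0. ring.
  - simpl pow. rewrite IH, <- exp_plus, S_INR. f_equal; ring.
Qed.

Lemma expand (q : R -> R) g m x : 0 < g ->
  q x * f_gamma g x * F_gamma g x ^ m =
  sum_f_R0 (fun j => (C m j * (-1) ^ j / g) * (q x * exp (- ((INR j + 1) / g) * x))) m.
Proof.
  intros Hg. unfold F_gamma, f_gamma.
  replace (1 - exp (- x / g)) with (- exp (- x / g) + 1) by ring.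
  rewrite binomial, scal_sum. apply sum_eq. intros j Hj.
  rewrite pow1R. replace (- exp (- x / g)) with ((-1) * exp (- x / g)) by ring.
  rewrite Rpow_mult_distr, exp_pow.
  replace (exp (- ((INR j + 1) / g) * x)) with (exp (INR j * (- x / g)) * exp (- x / g)).
  - field. lra.
  - rewrite <- exp_plus. f_equal. field. lra.
Qed.

Lemma conv_U g m : 0 < g ->
  conv (fun x => x * f_gamma g x * F_gamma g x ^ m) 0
    (g * sum_f_R0 (fun j => C m j * (-1) ^ j / (INR j + 1) ^ 2) m).
Proof.
  intros Hg.
  eapply conv_ext. { intros x _. symmetry. apply (expand (fun x => x)); auto. }
  rewrite scal_sum.
  erewrite sum_eq.
  - apply conv_sum. intros j _. apply conv_scal. apply conv_e1; [lra|].
    pose proof (pos_INR j). apply Rdiv_lt_0_compat; lra.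
  - intros j _. pose proof (pos_INR j). cbv beta. replace (- ((INR j + 1) / g) * 0) with 0 by ring. rewrite exp_0. field. lra.
Qed.

Lemma conv_W g m : 0 < g ->
  conv (fun x => x * x * f_gamma g x * F_gamma g x ^ m) 0
    (2 * g * g * sum_f_R0 (fun j => C m j * (-1) ^ j / (INR j + 1) ^ 3) m).
Proof.
  intros Hg.
  eapply conv_ext. { intros x _. symmetry. apply (expand (fun x => x * x)); auto. }
  rewrite scal_sum.
  erewrite sum_eq.
  - apply conv_sum. intros j _. apply conv_scal. apply conv_e2; [lra|].
    pose proof (pos_INR j). apply Rdiv_lt_0_compat; lra.
  - intros j _. pose proof (pos_INR j). cbv beta. replace (- ((INR j + 1) / g) * 0) with 0 by ring. rewrite exp_0. field. lra.
Qed.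

Lemma exp_le1 y : y <= 0 -> exp y <= 1.
Proof.
  intros H. destruct (Req_dec y 0) as [->|N]; [rewrite exp_0; lra|].
  rewrite <- exp_0. apply Rlt_le, exp_increasing. lra.
Qed.

Lemma ln2_pos : 0 < ln 2.
Proof. rewrite <- ln_1. apply ln_increasing; lra. Qed.

Lemma ln_le_sub y : 0 < y -> ln y <= y - 1.
Proof.
  intros Hy. rewrite <- (ln_exp (y - 1)). apply ln_le; auto.
  pose proof (exp_ineq1_le (y - 1)). lra.
Qed.

Lemma ln1p_bounds x : 0 <= x -> x - x * x <= ln (1 + x) <= x.
Proof.
  intros Hx. split.
  - assert (ln (/ (1 + x)) <= / (1 + x) - 1) by (apply ln_le_sub; apply Rinv_0_lt_compat; lra).
    rewrite ln_Rinv in H by lra.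
    assert (x - x * x <= 1 - / (1 + x)); [|lra].
    apply Rmult_le_reg_r with (1 + x); [lra|].
    replace ((1 - / (1 + x)) * (1 + x)) with x by (field; lra). nra.
  - pose proof (ln_le_sub (1 + x)). lra.
Qed.

Lemma RSD_est M : (1 <= M)%nat -> exists K, forall g, 0 < g ->
  Rabs (R_SD M g - g / (2 * ln 2) * harm (2 * M)) <= K * (g * g).
Proof.
  intros HM. set (m := (2 * M - 1)%nat).
  set (T := sum_f_R0 (fun j => C m j * (-1) ^ j / (INR j + 1) ^ 3) m).
  exists (INR M * 2 * Rabs T / ln 2). intros g Hg.
  pose proof ln2_pos as Hl.
  set (P := fun x => f_gamma g x * F_gamma g x ^ m).
  assert (HP : forall x, 0 <= x -> 0 <= P x).
  { intros x Hx. unfold P, f_gamma, F_gamma. apply Rmult_le_pos.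
    - apply Rlt_le, Rdiv_lt_0_compat; [apply exp_pos|lra].
    - apply pow_le. assert (exp (- x / g) <= 1); [|lra].
      apply exp_le1. unfold Rdiv.
      assert (0 <= x * / g) by (apply Rmult_le_pos; [lra|apply Rlt_le, Rinv_0_lt_compat; lra]). lra. }
  set (h := fun x => log2 (1 + x) * f_gamma g x * F_gamma g x ^ m).
  pose proof (conv_scal _ _ _ (/ ln 2) (conv_U g m Hg)) as CU.
  pose proof (conv_plus _ _ _ _ _ CU (conv_scal _ _ _ (- / ln 2) (conv_W g m Hg))) as CV.
  assert (Hbnd : forall x, 0 <= x -> 0 <= h x <= / ln 2 * (x * f_gamma g x * F_gamma g x ^ m)).
  { intros x Hx. unfold h. pose proof (ln1p_bounds x Hx). pose proof (HP x Hx).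
    unfold P in H0. unfold log2. split.
    + assert (0 <= ln (1 + x)) by (rewrite <- ln_1; apply ln_le; lra).
      rewrite Rmult_assoc. apply Rmult_le_pos; auto. apply Rmult_le_pos; [lra|].
      apply Rlt_le, Rinv_0_lt_compat; lra.
    + replace (ln (1 + x) / ln 2 * f_gamma g x * F_gamma g x ^ m) with
        (/ ln 2 * (ln (1 + x) * (f_gamma g x * F_gamma g x ^ m))) by (field; lra).
      replace (x * f_gamma g x * F_gamma g x ^ m) with (x * (f_gamma g x * F_gamma g x ^ m)) by ring.
      apply Rmult_le_compat_l; [apply Rlt_le, Rinv_0_lt_compat; lra|].
      apply Rmult_le_compat_r; [auto|lra]. }
  assert (Hcont : forall x, 0 <= x -> continuous h x).
  { intros x Hx; apply cont_of_ex; unfold h, log2, f_gamma, F_gamma; auto_derive; lra. }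
  destruct (conv_mono h _ 0 _ Hcont Hbnd CU) as [l Cl].
assert (Hup : l <= / ln 2 * (g * sum_f_R0 (fun j => C m j * (-1) ^ j / (INR j + 1) ^ 2) m)).
    { refine (conv_le h _ 0 _ _ _ Cl CU). intros x Hx. cbv beta. apply Hbnd; auto. }
    assert (Hlo : / ln 2 * (g * sum_f_R0 (fun j => C m j * (-1) ^ j / (INR j + 1) ^ 2) m)
                  + - / ln 2 * (2 * g * g * T) <= l).
    { refine (conv_le _ h 0 _ _ _ CV Cl). intros x Hx. cbv beta. unfold h.
      pose proof (ln1p_bounds x Hx). pose proof (HP x Hx). unfold P in H0. unfold log2.
      replace (ln (1 + x) / ln 2 * f_gamma g x * F_gamma g x ^ m) with
        (/ ln 2 * (ln (1 + x) * (f_gamma g x * F_gamma g x ^ m))) by (field; lra).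
      replace (/ ln 2 * (x * f_gamma g x * F_gamma g x ^ m) +
               - / ln 2 * (x * x * f_gamma g x * F_gamma g x ^ m)) with
        (/ ln 2 * ((x - x * x) * (f_gamma g x * F_gamma g x ^ m))) by ring.
      apply Rmult_le_compat_l; [apply Rlt_le, Rinv_0_lt_compat; lra|].
      apply Rmult_le_compat_r; [auto|lra]. }
    assert (HR : R_SD M g = INR M * l).
    { unfold R_SD. f_equal. apply conv_int. exact Cl. }
    rewrite sumS in Hup, Hlo.
    assert (Hm : INR m + 1 = 2 * INR M).
    { unfold m. rewrite minus_INR by lia. rewrite mult_INR. simpl. ring. }
    replace (S m) with (2 * M)%nat in Hup, Hlo by (unfold m; lia).
    rewrite Hm in Hup, Hlo.
    assert (HMp : 0 < INR M) by (apply lt_0_INR; lia).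
    set (H2 := harm (2 * M)) in *.
    assert (E : g / (2 * ln 2) * H2 = INR M * (/ ln 2 * (g * (H2 / (2 * INR M))))) by (field; lra).
    rewrite HR, E. rewrite <- Rmult_minus_distr_l, Rabs_mult, Rabs_pos_eq by lra.
    rewrite Rabs_left1 by lra.
    assert (- (l - / ln 2 * (g * (H2 / (2 * INR M)))) <= / ln 2 * (2 * g * g * T)) by lra.
    assert (/ ln 2 * (2 * g * g * T) <= 2 * Rabs T / ln 2 * (g * g)).
    { pose proof (Rle_abs T). unfold Rdiv.
      replace (/ ln 2 * (2 * g * g * T)) with (2 * T * / ln 2 * (g * g)) by ring.
      apply Rmult_le_compat_r; [nra|]. apply Rmult_le_compat_r; [apply Rlt_le, Rinv_0_lt_compat; lra|]. lra. }
    replace (INR M * 2 * Rabs T / ln 2 * (g * g)) with (INR M * (2 * Rabs T / ln 2 * (g * g))) by (field; lra).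
    apply Rmult_le_compat_l; lra.
Qed.

Lemma E1_bounds x : 0 < x -> 1 / x - 1 / (x * x) <= exp x * E1 x <= 1 / x.
Proof.
  intros Hx.
  set (h := fun t => exp (- x * t) / t).
  pose proof (conv_e0 x 1 ltac:(lra) Hx) as CK.
  pose proof (conv_plus _ _ _ _ _ (conv_scal _ _ _ 2 CK)
                (conv_scal _ _ _ (-1) (conv_e1 x 1 ltac:(lra) Hx))) as CW.
  assert (Hbnd : forall t, 1 <= t -> 0 <= h t <= exp (- x * t)).
  { intros t Ht. unfold h. pose proof (exp_pos (- x * t)). split.
    - apply Rlt_le, Rdiv_lt_0_compat; lra.
    - apply Rmult_le_reg_r with t; [lra|]. unfold Rdiv.
      rewrite Rmult_assoc, Rinv_l by lra. nra. }
  assert (Hcont : forall t, 1 <= t -> continuous h t).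
  { intros t Ht; apply cont_of_ex; unfold h; auto_derive; lra. }
  destruct (conv_mono h _ 1 _ Hcont Hbnd CK) as [l Cl].
  assert (HE : E1 x = l) by (unfold E1; apply conv_int; exact Cl).
  assert (Hup : l <= exp (- x * 1) / x).
  { refine (conv_le h _ 1 _ _ _ Cl CK). intros t Ht. apply Hbnd; auto. }
  assert (Hlo : 2 * (exp (- x * 1) / x) + -1 * ((1 / x + 1 / (x * x)) * exp (- x * 1)) <= l).
  { refine (conv_le _ h 1 _ _ _ CW Cl). intros t Ht. cbv beta. unfold h.
    pose proof (exp_pos (- x * t)).
    replace (2 * exp (- x * t) + -1 * (t * exp (- x * t))) with ((2 - t) * exp (- x * t)) by ring.
    unfold Rdiv. rewrite Rmult_comm. apply Rmult_le_compat_l; [lra|].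
    apply Rmult_le_reg_r with t; [lra|]. rewrite Rinv_l by lra. nra. }
  rewrite HE. replace (- x * 1) with (- x) in * by ring.
  assert (Hee : exp x * exp (- x) = 1) by (rewrite <- exp_plus; replace (x + - x) with 0 by ring; apply exp_0).
  pose proof (exp_pos x).
  split.
  - apply Rmult_le_compat_l with (r := exp x) in Hlo; [|lra].
    eapply Rle_trans; [|exact Hlo]. right.
    replace (exp x * (2 * (exp (- x) / x) + -1 * ((1 / x + 1 / (x * x)) * exp (- x))))
      with ((exp x * exp (- x)) * (1 / x - 1 / (x * x))) by (field; lra).
    rewrite Hee; ring.
  - apply Rmult_le_compat_l with (r := exp x) in Hup; [|lra].
    eapply Rle_trans; [exact Hup|]. right.
    replace (exp x * (exp (- x) / x)) with ((exp x * exp (- x)) / x) by (field; lra).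
    rewrite Hee. reflexivity.
Qed.

Lemma C_nonneg n k : 0 <= C n k.
Proof.
  unfold C. apply Rmult_le_pos; [apply pos_INR|].
  apply Rlt_le, Rinv_0_lt_compat. apply Rmult_lt_0_compat; apply INR_fact_lt_0.
Qed.

Lemma Rconv_est M : (1 <= M)%nat -> exists K, forall g, 0 < g ->
  Rabs (R_conv M g - g / (4 * ln 2) * harm M) <= K * (g * g).
Proof.
  intros HM. pose proof ln2_pos as Hl.
  exists (INR M / 2 * sum_f_R0 (fun k => C (M - 1) k / ln 2) (M - 1)).
  intros g Hg.
  set (x := fun k : nat => 2 * (1 + INR k) / g).
  set (a := fun k : nat => C (M - 1) k * (-1) ^ k / ((1 + INR k) * ln 2)).
  set (d := fun k : nat => exp (x k) * E1 (x k) - 1 / x k).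
  assert (Hx : forall k, 0 < x k).
  { intros k. unfold x. pose proof (pos_INR k). apply Rdiv_lt_0_compat; lra. }
  assert (Hd : forall k, Rabs (d k) <= g * g).
  { intros k. pose proof (E1_bounds (x k) (Hx k)). unfold d.
    assert (1 / (x k * x k) <= g * g).
    { unfold x. pose proof (pos_INR k).
      replace (1 / (2 * (1 + INR k) / g * (2 * (1 + INR k) / g))) with
        (g * g / (4 * ((1 + INR k) * (1 + INR k)))) by (field; lra).
      unfold Rdiv. rewrite <- (Rmult_1_r (g * g)) at 2.
      apply Rmult_le_compat_l; [nra|].
      rewrite <- Rinv_1. apply Rinv_le_contravar; [lra|nra]. }
    apply Rabs_le. lra. }
  assert (HR : R_conv M g = INR M / 2 * sum_f_R0 (fun k => a k * (1 / x k)) (M - 1)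
                          + INR M / 2 * sum_f_R0 (fun k => a k * d k) (M - 1)).
  { rewrite <- Rmult_plus_distr_l, <- sum_plus. unfold R_conv. f_equal.
    apply sum_eq. intros k _. unfold a, d, x. ring. }
  assert (HT : INR M / 2 * sum_f_R0 (fun k => a k * (1 / x k)) (M - 1) = g / (4 * ln 2) * harm M).
  { rewrite (sum_eq _ (fun k => C (M - 1) k * (-1) ^ k / (INR k + 1) ^ 2 * (g / (2 * ln 2)))).
    - rewrite <- scal_sum, sumS. replace (S (M - 1)) with M by lia.
      rewrite minus_INR by lia. simpl INR at 2.
      assert (0 < INR M) by (apply lt_0_INR; lia).
      simpl INR. field. lra.
    - intros k _. unfold a, x. pose proof (pos_INR k). field. lra. }
  rewrite HR, HT. replace (g / (4 * ln 2) * harm M + INR M / 2 * sum_f_R0 (fun k => a k * d k) (M - 1)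
     - g / (4 * ln 2) * harm M) with (INR M / 2 * sum_f_R0 (fun k => a k * d k) (M - 1)) by ring.
  assert (0 < INR M) by (apply lt_0_INR; lia).
  rewrite Rabs_mult, (Rabs_pos_eq (INR M / 2)) by lra.
  rewrite Rmult_assoc. apply Rmult_le_compat_l; [lra|].
  eapply Rle_trans; [apply sum_f_R0_triangle|].
  rewrite Rmult_comm, scal_sum.
  apply sum_Rle. intros k _.
  cbv beta. rewrite Rabs_mult. unfold a. pose proof (C_nonneg (M - 1) k). pose proof (pos_INR k).
  assert (Ha : Rabs (C (M - 1) k * (-1) ^ k / ((1 + INR k) * ln 2)) <= C (M - 1) k / ln 2).
  { unfold Rdiv. rewrite !Rabs_mult, pow_1_abs, Rabs_pos_eq by lra.
    rewrite Rabs_pos_eq.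
    2: { apply Rlt_le, Rinv_0_lt_compat. apply Rmult_lt_0_compat; lra. }
    rewrite Rinv_mult. rewrite Rmult_1_r.
    apply Rmult_le_compat_l; [lra|].
    rewrite <- (Rmult_1_l (/ ln 2)) at 2. apply Rmult_le_compat_r.
    - apply Rlt_le, Rinv_0_lt_compat; lra.
    - rewrite <- Rinv_1. apply Rinv_le_contravar; lra. }
  apply Rmult_le_compat; auto using Rabs_pos.
Qed.

Lemma nat_unbounded A : exists n : nat, A < INR n.
Proof.
  destruct (archimed A) as [H _]. exists (Z.to_nat (up A)).
  destruct (Z_lt_le_dec (up A) 0) as [Hz|Hz].
  - apply IZR_lt in Hz. pose proof (pos_INR (Z.to_nat (up A))). lra.
  - rewrite INR_IZR_INZ, Z2Nat.id by lia. lra.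
Qed.

Lemma harm_S n : harm (S n) = harm n + / (INR n + 1).
Proof. change (harm (S n)) with (harm n + / INR (S n)). rewrite S_INR. reflexivity. Qed.

Lemma harm_mono n m : (n <= m)%nat -> harm n <= harm m.
Proof.
  induction 1; [lra|]. rewrite harm_S. pose proof (pos_INR m).
  assert (0 < / (INR m + 1)) by (apply Rinv_0_lt_compat; lra). lra.
Qed.

Lemma harm_pos n : (1 <= n)%nat -> 0 < harm n.
Proof.
  intros H. apply Rlt_le_trans with (harm 1); [simpl; lra|]. apply harm_mono; auto.
Qed.

Lemma harm_2S M : harm (2 * S M) = harm (2 * M) + / (2 * INR M + 1) + / (2 * INR M + 2).
Proof.
  replace (2 * S M)%nat with (S (S (2 * M))) by lia.
  rewrite !harm_S, S_INR, mult_INR. simpl INR. field_simplify_eq; [ring|].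
  pose proof (pos_INR M). split; lra.
Qed.

Lemma harm_up M : 2 * harm (2 * M) <= 3 * harm M.
Proof.
  induction M as [|M IH].
  - simpl. lra.
  - rewrite harm_2S, harm_S. pose proof (pos_INR M).
    assert (/ (2 * INR M + 1) <= / (INR M + 1)) by (apply Rinv_le_contravar; lra).
    assert (/ (2 * INR M + 2) = / (INR M + 1) / 2) by (field; lra).
    lra.
Qed.

Lemma harm_D_up M : harm (2 * M) - harm M <= INR M / (INR M + 1).
Proof.
  induction M as [|M IH].
  - simpl. lra.
  - rewrite harm_2S, harm_S, S_INR. pose proof (pos_INR M).
    assert (E : / (2 * INR M + 1) + / (2 * INR M + 2) - / (INR M + 1)
              = / ((2 * INR M + 1) * (2 * INR M + 2))) by (field; lra).
    assert (E2 : (INR M + 1) / (INR M + 1 + 1) - INR M / (INR M + 1)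
              = / ((INR M + 1) * (INR M + 2))) by (field; lra).
    assert (/ ((2 * INR M + 1) * (2 * INR M + 2)) <= / ((INR M + 1) * (INR M + 2))).
    { apply Rinv_le_contravar; nra. }
    lra.
Qed.

Lemma harm_D_low M : (1 <= M)%nat -> 1 / 2 <= harm (2 * M) - harm M.
Proof.
  induction 1 as [|M HM IH].
  - simpl. lra.
  - rewrite harm_2S, harm_S. pose proof (pos_INR M).
    assert (E : / (2 * INR M + 1) + / (2 * INR M + 2) - / (INR M + 1)
              = / ((2 * INR M + 1) * (2 * INR M + 2))) by (field; lra).
    assert (0 < / ((2 * INR M + 1) * (2 * INR M + 2))) by (apply Rinv_0_lt_compat; nra).
    lra.
Qed.

Lemma harm_pow2 k : 1 + INR k / 2 <= harm (2 ^ k).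
Proof.
  induction k as [|k IH].
  - simpl. lra.
  - rewrite S_INR. replace (2 ^ S k)%nat with (2 * 2 ^ k)%nat by (simpl; lia).
    assert (1 <= 2 ^ k)%nat by (apply Nat.le_succ_l, Nat.neq_0_lt_0, Nat.pow_nonzero; lia).
    pose proof (harm_D_low _ H). lra.
Qed.

Lemma ratio_bounds M : (1 <= M)%nat -> 2 <= 2 * harm (2 * M) / harm M <= 3.
Proof.
  intros HM. pose proof (harm_pos M HM). pose proof (harm_up M).
  pose proof (harm_mono M (2 * M) ltac:(lia)).
  split; apply Rmult_le_reg_r with (harm M); auto;
    unfold Rdiv; rewrite Rmult_assoc, Rinv_l; lra.
Qed.

Lemma ratio_cv : Un_cv (fun M => 2 * harm (2 * M) / harm M) 2.
Proof.
  intros eps He.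
  destruct (nat_unbounded (2 * (2 / eps))) as [k Hk].
  exists (Nat.max 1 (2 ^ k)). intros n Hn. unfold Rdist.
  assert (H1 : (1 <= n)%nat) by lia.
  pose proof (harm_pos n H1).
  pose proof (harm_mono (2 ^ k) n ltac:(lia)). pose proof (harm_pow2 k).
  pose proof (harm_D_up n). pose proof (harm_D_low n H1). pose proof (pos_INR n).
  assert (INR n / (INR n + 1) <= 1) by (apply Rmult_le_reg_r with (INR n + 1); [lra|];
    unfold Rdiv; rewrite Rmult_assoc, Rinv_l; lra).
  replace (2 * harm (2 * n) / harm n - 2) with (2 * (harm (2 * n) - harm n) / harm n) by (field; lra).
  rewrite Rabs_pos_eq.
  2: { apply Rmult_le_pos; [lra|]. apply Rlt_le, Rinv_0_lt_compat; lra. }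
  apply Rmult_lt_reg_r with (harm n); [lra|].
  unfold Rdiv. rewrite Rmult_assoc, Rinv_l by lra.
  assert (2 / eps * eps = 2) by (field; lra).
  assert (2 / eps < harm n) by lra.
  assert (2 < eps * harm n).
  { rewrite <- H7 at 1. rewrite (Rmult_comm eps). apply Rmult_lt_compat_r; lra. }
  lra.
Qed.

Lemma lim_ratio (F D : R -> R) c K : c <> 0 -> (forall g, 0 < g -> D g = c * g) ->
  (forall g, 0 < g -> Rabs (F g - D g) <= K * (g * g)) ->
  limit1_in (fun g => F g / D g) (fun g => 0 < g) 1 0.
Proof.
  intros Hc HD HF eps He. unfold dist; simpl; unfold Rdist.
  assert (Hca : 0 < Rabs c) by (apply Rabs_pos_lt; auto).
  assert (HK : 0 <= Rabs K) by apply Rabs_pos.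
  exists (eps * Rabs c / (Rabs K + 1)). split.
  { apply Rdiv_lt_0_compat; [apply Rmult_lt_0_compat|]; lra. }
  intros g [Hg Hd]. rewrite Rminus_0_r, Rabs_pos_eq in Hd by lra.
  rewrite HD by auto. specialize (HF g Hg). rewrite HD in HF by auto.
  replace (F g / (c * g) - 1) with ((F g - c * g) / (c * g)) by (field; lra).
  unfold Rdiv. rewrite Rabs_mult, Rabs_Rinv by (apply Rmult_integral_contrapositive; lra).
  rewrite Rabs_mult, (Rabs_pos_eq g) by lra.
  assert (Hp : 0 < Rabs c * g) by nra.
  apply Rmult_lt_reg_r with (Rabs c * g); [lra|].
  rewrite Rmult_assoc, Rinv_l by lra. rewrite Rmult_1_r.
  eapply Rle_lt_trans; [exact HF|].
  assert (K * (g * g) <= Rabs K * (g * g)) by (apply Rmult_le_compat_r; [nra|apply Rle_abs]).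
  assert (g * (Rabs K + 1) < eps * Rabs c).
  { apply Rmult_lt_reg_r with (/ (Rabs K + 1)). apply Rinv_0_lt_compat; lra.
    rewrite Rmult_assoc, Rinv_r by lra. lra. }
  nra.
Qed.

Lemma limit1_in_ext (f g : R -> R) D l x0 : (forall x, D x -> f x = g x) ->
  limit1_in f D l x0 -> limit1_in g D l x0.
Proof.
  intros E H eps He. destruct (H eps He) as [a [Ha Hb]]. exists a. split; auto.
  intros x Hx. rewrite <- E by (apply Hx). apply Hb; auto.
Qed.

Lemma limit1_in_const D c x0 : limit1_in (fun _ => c) D c x0.
Proof.
  intros eps He. exists 1. split; [lra|]. intros x _. simpl. unfold Rdist.
  rewrite Rminus_diag, Rabs_R0. lra.
Qed.

Theorem mainTheorem5 :
  (forall M : nat, (1 <= M)%nat ->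
     limit1_in (fun g => R_SD M g / (g / (2 * ln 2) * harm (2 * M)))
               (fun g => 0 < g) 1 0
  /\ limit1_in (fun g => R_conv M g / (g / (4 * ln 2) * harm M))
               (fun g => 0 < g) 1 0
  /\ limit1_in (fun g => R_SD M g / R_conv M g)
               (fun g => 0 < g) (2 * harm (2 * M) / harm M) 0
  /\ 2 <= 2 * harm (2 * M) / harm M <= 3)
  /\ 2 * harm 2 / harm 1 = 3
  /\ Un_cv (fun M => 2 * harm (2 * M) / harm M) 2.
Proof.
  split; [|split].
  - intros M HM.
    destruct (RSD_est M HM) as [K1 H1]. destruct (Rconv_est M HM) as [K2 H2].
    pose proof ln2_pos as Hl. pose proof (harm_pos M HM) as HhM.
    pose proof (harm_pos (2 * M) ltac:(lia)) as Hh2.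
    assert (L1 : limit1_in (fun g => R_SD M g / (g / (2 * ln 2) * harm (2 * M))) (fun g => 0 < g) 1 0).
    { apply (lim_ratio _ _ (harm (2 * M) / (2 * ln 2)) K1).
      - apply Rgt_not_eq, Rdiv_lt_0_compat; lra.
      - intros g _. field. lra.
      - exact H1. }
    assert (L2 : limit1_in (fun g => R_conv M g / (g / (4 * ln 2) * harm M)) (fun g => 0 < g) 1 0).
    { apply (lim_ratio _ _ (harm M / (4 * ln 2)) K2).
      - apply Rgt_not_eq, Rdiv_lt_0_compat; lra.
      - intros g _. field. lra.
      - exact H2. }
    split; [exact L1|split; [exact L2|split; [|apply ratio_bounds; auto]]].
    pose proof (limit_mul _ _ _ _ _ _
                  (limit_mul _ _ _ _ _ _ L1 (limit_inv _ _ _ _ L2 R1_neq_R0))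
                  (limit1_in_const (fun g => 0 < g) (2 * harm (2 * M) / harm M) 0)) as L3.
    rewrite Rinv_1, !Rmult_1_l in L3.
    eapply limit1_in_ext; [|exact L3].
    intros g Hg. cbv beta.
    unfold Rdiv. rewrite !Rinv_mult, !Rinv_inv. set (r := / R_conv M g). field.
    repeat split; lra.
  - simpl. field.
  - exact ratio_cv.
Qed.
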